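(* Let $E$ be an equivalence relation on a Polish space $X$. If $E$ is Borel graphable, then its Friedman–Stanley jump $E^+$ is also Borel graphable.
   Context: $E$ is Borel graphable if there is a Borel simple undirected graph $G\subseteq X\times X$ whose connectedness relation (connected by a finite path) equals $E$. The Friedman–Stanley jump $E^+$ is the equivalence relation on $X^\mathbb{N}$ given by $(x_i)E^+(y_i)$ iff $\{[x_i]_E:i\in\mathbb{N}\}=\{[y_i]_E:i\in\mathbb{N}\}$. *)

(* Defs.v *)
From HB Require Import structures.
From Stdlib Require Import Relations.Relation_Operators.
From mathcomp Require Import all_boot all_order all_algebra.
From mathcomp Require Import all_classical all_reals all_analysis.
From mathcomp Require Import Rstruct Rstruct_topology.
Set Implicit Arguments. Unset Strict Implicit. Unset Printing Implicit Defensive.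
Import Order.TTheory GRing.Theory Num.Theory.
Local Open Scope classical_set_scope.
Local Open Scope ring_scope.

Notation RR := Rdefinitions.R.

Definition is_metric (T : Type) (d : T -> T -> RR) : Prop :=
  (forall x y, 0 <= d x y) /\ (forall x y, d x y = 0 <-> x = y) /\
  (forall x y, d x y = d y x) /\ (forall x y z, d x z <= d x y + d y z).

Definition metric_compatible (T : topologicalType) (d : T -> T -> RR) : Prop :=
  forall A : set T, open A <->
    (forall x, A x -> exists e : RR, 0 < e /\ (forall y, d x y < e -> A y)).

Definition metric_complete (T : Type) (d : T -> T -> RR) : Prop :=
  forall u : nat -> T,
    (forall e : RR, 0 < e -> exists N, forall m n, (N <= m)%N -> (N <= n)%N ->
        d (u m) (u n) < e) ->
    exists l, forall e : RR, 0 < e -> exists N, forall n, (N <= n)%N -> d (u n) l < e.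

Definition polish (T : topologicalType) : Prop :=
  (exists D : set T, countable D /\ dense D) /\
  (exists d : T -> T -> RR, is_metric d /\ metric_compatible d /\ metric_complete d).

Definition borel (T : topologicalType) : set (set T) := <<s (@open T) >>.

Definition is_equivalence_rel (T : Type) (E : T -> T -> Prop) : Prop :=
  (forall x, E x x) /\ (forall x y, E x y -> E y x) /\
  (forall x y z, E x y -> E y z -> E x z).

Definition connectedness (T : Type) (G : set (T * T)) : T -> T -> Prop :=
  clos_refl_trans T (fun a b => G (a, b)).

Definition borel_graphable (T : topologicalType) (E : T -> T -> Prop) : Prop :=
  exists G : set (T * T),
    borel G /\
    (forall x y, G (x, y) -> G (y, x)) /\
    (forall x, ~ G (x, x)) /\
    (forall x y, connectedness G x y <-> E x y).

Definition fs_jump (T : topologicalType) (E : T -> T -> Prop) :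
    {ptws nat -> T} -> {ptws nat -> T} -> Prop :=
  fun x y => range (fun i => (E (x i) : set T)) = range (fun i => (E (y i) : set T)).

(* Main.v *)
Require Import Defs.
From Stdlib Require Import Relations.Relation_Operators Relations.Operators_Properties Cantor.
From mathcomp Require Import all_boot all_order all_algebra.
From mathcomp Require Import all_classical all_reals all_analysis.
From mathcomp Require Import Rstruct Rstruct_topology lra.
Import Order.TTheory GRing.Theory Num.Theory.
Local Open Scope classical_set_scope.
Local Open Scope ring_scope.
Set Implicit Arguments. Unset Strict Implicit.

Section B.
Variable T : topologicalType.

Lemma borel_not (P : T -> Prop) : borel [set w | P w] -> borel [set w | ~ P w].
Proof.
move=> h; have -> : [set w | ~ P w] = setT `\` [set w | P w].
  by apply/seteqP; split=> w /=; [move=> ?; split|case].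
exact: sigma_algebraCD.
Qed.

Lemma borel_exists (P : nat -> T -> Prop) :
  (forall n, borel [set w | P n w]) -> borel [set w | exists n, P n w].
Proof.
move=> h; have -> : [set w | exists n, P n w] = \bigcup_n [set w | P n w].
  by apply/seteqP; split=> w /=; [case=> n ?; exists n|case=> n _ ?; exists n].
exact: sigma_algebra_bigcup.
Qed.

Lemma borel_ext (P Q : T -> Prop) : (forall w, P w <-> Q w) ->
  borel [set w | P w] -> borel [set w | Q w].
Proof.
move=> h; have -> // : [set w | P w] = [set w | Q w].
by apply/seteqP; split=> w /= /h.
Qed.

Lemma borel_forall (P : nat -> T -> Prop) :
  (forall n, borel [set w | P n w]) -> borel [set w | forall n, P n w].
Proof.
move=> h; apply: (@borel_ext (fun w => ~ exists n, ~ P n w)).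
  move=> w; split; last by move=> H [n]; apply.
  by move=> H n; apply: contrapT => Hn; apply: H; exists n.
by apply: borel_not; apply: borel_exists => n; apply: borel_not.
Qed.

Lemma borel_or (P Q : T -> Prop) :
  borel [set w | P w] -> borel [set w | Q w] -> borel [set w | P w \/ Q w].
Proof.
move=> hP hQ; apply: (@borel_ext (fun w => exists n : nat, if n is 0%N then P w else Q w)).
  move=> w; split; first by case=> -[|n] ?; [left|right].
  by case=> ?; [exists 0%N|exists 1%N].
by apply: borel_exists => -[|n].
Qed.

Lemma borel_and (P Q : T -> Prop) :
  borel [set w | P w] -> borel [set w | Q w] -> borel [set w | P w /\ Q w].
Proof.
move=> hP hQ; apply: (@borel_ext (fun w => ~ (~ P w \/ ~ Q w))).
  move=> w; split; last by move=> [? ?] [].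
  move=> H; split; apply: contrapT => ?; apply: H; by [left|right].
by apply: borel_not; apply: borel_or; apply: borel_not.
Qed.

Lemma borel_preimage (U : topologicalType) (f : T -> U) (A : set U) :
  continuous f -> borel A -> borel (f @^-1` A).
Proof.
move=> fc; rewrite /borel => hA.
have : (<<s @open U >>) `<=` [set B | <<s @open T >> (f @^-1` B)].
  apply: smallest_sub.
    split => /=.
    - by rewrite preimage_set0; exact: sigma_algebra0.
    - by move=> B hB; rewrite setTD preimage_setC -setTD; exact: sigma_algebraCD.
    - by move=> F hF; rewrite preimage_bigcup; exact: sigma_algebra_bigcup.
  move=> B oB /=; apply: sub_sigma_algebra.
  by apply: open_comp => // x _; exact: fc.
by move/(_ A hA).
Qed.

End B.
Lemma pair_cont (T U V : topologicalType) (f : T -> U) (g : T -> V) :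
  continuous f -> continuous g -> continuous (fun w => (f w, g w)).
Proof. by move=> fc gc w; apply: cvg_pair; [exact: fc|exact: gc]. Qed.

Lemma coord1_cont (X : topologicalType) (n : nat) :
  continuous (fun w : {ptws nat -> X} * {ptws nat -> X} => w.1 n).
Proof.
move=> w.
apply: (@continuous_comp _ _ _ fst (fun x : {ptws nat -> X} => x n)).
  exact: cvg_fst.
exact: (@proj_continuous nat (fun _ => X) n).
Qed.

Lemma coord2_cont (X : topologicalType) (n : nat) :
  continuous (fun w : {ptws nat -> X} * {ptws nat -> X} => w.2 n).
Proof.
move=> w.
apply: (@continuous_comp _ _ _ snd (fun x : {ptws nat -> X} => x n)).
  exact: cvg_snd.
exact: (@proj_continuous nat (fun _ => X) n).
Qed.

Lemma diag_open (X : topologicalType) (d : X -> X -> RR) :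
  is_metric d -> metric_compatible d -> open [set p : X * X | p.1 <> p.2].
Proof.
move=> [d0 [deq [dsym dtri]]] dc.
have ballo : forall x (r : RR), open [set y | d x y < r].
  move=> x r; apply/dc => y /= hy; exists (r - d x y); split; first by lra.
  move=> z hz /=; have := dtri x y z; lra.
rewrite openE => -[x y] /= xy.
have dpos : 0 < d x y.
  rewrite lt_neqAle d0 andbT; apply/eqP => h; apply: xy; apply/deq; by rewrite h.
pose r := d x y / 2.
exists ([set u | d x u < r], [set v | d y v < r]).
  split; apply: open_nbhs_nbhs; split; try exact: ballo.
    by rewrite /= (deq x x).2 // /r; lra.
  by rewrite /= (deq y y).2 // /r; lra.
move=> [u v] /= [hu hv] uv; subst v.
have := dtri x u y; rewrite (dsym u y); rewrite /r in hu hv; lra.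
Qed.
Section Comb.
Variables (X : Type) (E : X -> X -> Prop) (G : set (X * X)).
Hypothesis hE : is_equivalence_rel E.
Hypothesis hGE : forall x y, connectedness G x y <-> E x y.

Definition Rr (z : nat -> X) (j k : nat) := z (Cantor.to_nat (j.*2.+1, k)).
Definition Cc (z : nat -> X) (i k : nat) := z (Cantor.to_nat (i.*2, k)).
Definition walk (f : nat -> X) := forall k, f k.+1 = f k \/ G (f k, f k.+1).
Definition Vz (z : nat -> X) :=
  (forall j, walk (Rr z j) /\ (exists i, Rr z j 0 = Cc z i 0) /\
             (exists K, forall k, Rr z j (K + k) = Rr z j K)) /\
  (forall i, walk (Cc z i) /\ exists k j m, Cc z i k = Rr z j m).
Definition Rel (x z : nat -> X) := Vz z /\
  ((forall i, Cc z i 0 = x i) \/ (forall j, exists K, forall k, Rr z j (K + k) = x j)).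

Let Erefl : forall x, E x x. Proof. by case: hE. Qed.
Let Esym : forall x y, E x y -> E y x. Proof. by case: hE => _ []. Qed.
Let Etrans : forall x y z, E x y -> E y z -> E x z. Proof. by case: hE => _ []. Qed.

Lemma GE a b : G (a, b) -> E a b.
Proof. by move=> h; apply/hGE; apply: rt_step. Qed.

Lemma walkE0 f : walk f -> forall k, E (f 0%N) (f k).
Proof.
move=> w; elim=> [|k IH]; first exact: Erefl.
by case: (w k) => [->|/GE h] //; exact: Etrans IH h.
Qed.

Lemma walkE f a b : walk f -> E (f a) (f b).
Proof. by move=> w; exact: Etrans (Esym (walkE0 w a)) (walkE0 w b). Qed.

Lemma classE a b : E a b -> (E a : set X) = E b.
Proof.
move=> h; apply/seteqP; split=> u /= hu; first by apply: Etrans hu; apply: Esym.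
exact: Etrans hu.
Qed.

Lemma fs_jumpP (x y : nat -> X) :
  range (fun i => (E (x i) : set X)) = range (fun i => (E (y i) : set X)) <->
  (forall i, exists j, E (x i) (y j)) /\ (forall j, exists i, E (y j) (x i)).
Proof.
split.
  move=> h; split.
    move=> i; have : range (fun i => (E (x i) : set X)) (E (x i)) by exists i.
    rewrite h => -[j _ hj]; exists j; rewrite -hj; exact: Erefl.
  move=> j; have : range (fun i => (E (y i) : set X)) (E (y j)) by exists j.
  rewrite -h => -[i _ hi]; exists i; rewrite -hi; exact: Erefl.
move=> [h1 h2]; apply/seteqP; split=> _ [i _ <-].
  by case: (h1 i) => j hj; exists j => //; apply/esym/classE.
by case: (h2 i) => j hj; exists j => //; apply/esym/classE.
Qed.

Lemma decode (z : nat -> X) n :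
  (exists j k, z n = Rr z j k) \/ (exists i k, z n = Cc z i k).
Proof.
rewrite -(cancel_to_of n); case: (of_nat n) => t k.
have ht := odd_double_half t; case: (odd t) ht => /= ht.
  left; exists t./2, k; rewrite /Rr.
  have -> : (t./2).*2.+1 = t by rewrite -[in RHS]ht /= add1n.
  by [].
right; exists t./2, k; rewrite /Cc.
have -> : (t./2).*2 = t by rewrite -[in RHS]ht /= add0n.
by [].
Qed.

Lemma Rel_sound x z : Rel x z ->
  range (fun i => (E (x i) : set X)) = range (fun i => (E (z i) : set X)).
Proof.
move=> [[hR hC] hx]; apply/fs_jumpP.
case: hx => hx.
  split.
    by move=> i; exists (Cantor.to_nat (i.*2, 0%N)); rewrite -(hx i); exact: Erefl.
  move=> n; case: (decode z n) => [[j [k ->]]|[i [k ->]]].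
    case: (hR j) => wj [[i hi] _]; exists i; rewrite -hx -hi.
    exact: walkE.
  by exists i; rewrite -hx; case: (hC i) => wi _; exact: walkE.
split.
  move=> j; case: (hx j) => K hK; exists (Cantor.to_nat (j.*2.+1, K)).
  by rewrite -(hK 0%N) addn0; exact: Erefl.
have hRx : forall j k, E (Rr z j k) (x j).
  move=> j k; case: (hx j) => K hK; case: (hR j) => wj _.
  rewrite -(hK 0%N); exact: walkE.
move=> n; case: (decode z n) => [[j [k ->]]|[i [k ->]]].
  by exists j.
case: (hC i) => wi [k' [j [m hm]]]; exists j.
apply: Etrans (hRx j m); rewrite -hm; exact: walkE.
Qed.

Lemma path_exists a b : E a b ->
  exists f, f 0%N = a /\ walk f /\ exists K, forall k, f (K + k)%N = b.
Proof.
move=> hab; have h := clos_rt_rt1n _ _ _ _ ((hGE a b).2 hab); clear hab; elim: h => [u|u v w huv _ [f [f0 [wf [K hK]]]]].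
  exists (fun _ => u); split=> //; split; first by move=> k; left.
  by exists 0%N.
exists (fun k => if k is k'.+1 then f k' else u); split=> //; split.
  by case=> [|k] /=; [right; rewrite f0|apply: wf].
by exists K.+1 => k; rewrite addSn.
Qed.

Lemma construct x y :
  range (fun i => (E (x i) : set X)) = range (fun i => (E (y i) : set X)) ->
  exists z, Rel x z /\ Rel y z.
Proof.
move=> /fs_jumpP [h1 h2].
have hR : forall j, exists f : nat -> X, (exists i, f 0%N = x i) /\ walk f /\
    exists K, forall k, f (K + k)%N = y j.
  move=> j; case: (h2 j) => i hi; case: (path_exists (Esym hi)) => f [f0 [wf hK]].
  by exists f; split; [exists i|split].
have [FR hFR] := choice hR.
have hK : forall j, exists K, forall k, FR j (K + k)%N = y j.
  by move=> j; case: (hFR j) => _ [].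
have [KK hKK] := choice hK.
have hC : forall i, exists f : nat -> X, f 0%N = x i /\ walk f /\
    exists k j, f k = FR j (KK j).
  move=> i; case: (h1 i) => j hj; case: (path_exists hj) => f [f0 [wf [K hf]]].
  exists f; split=> //; split=> //; exists K, j.
  by rewrite -(addn0 K) hf -(hKK j 0%N) addn0.
have [FC hFC] := choice hC.
pose z n := let: (t, k) := of_nat n in if odd t then FR t./2 k else FC t./2 k.
have zR : forall j k, Rr z j k = FR j k.
  by move=> j k; rewrite /Rr /z cancel_of_to /= odd_double uphalf_double.
have zC : forall i k, Cc z i k = FC i k.
  by move=> i k; rewrite /Cc /z cancel_of_to /= odd_double doubleK.
have Vzz : Vz z.
  split.
    move=> j; case: (hFR j) => [[i hi] [wj _]]; split.
      by move=> k; rewrite !zR; apply: wj.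
    split; first by exists i; rewrite zR zC hi; case: (hFC i).
    by exists (KK j) => k; rewrite !zR hKK -(addn0 (KK j)) hKK.
  move=> i; case: (hFC i) => _ [wi [k [j hk]]]; split.
    by move=> k'; rewrite !zC; apply: wi.
  by exists k, j, (KK j); rewrite zC zR.
exists z; split; split=> //.
  by left=> i; rewrite zC; case: (hFC i).
by right=> j; exists (KK j) => k; rewrite zR.
Qed.

End Comb.

Section BorelRel.
Variables (X T : topologicalType) (G : set (X * X)) (d : X -> X -> RR).
Hypotheses (dm : is_metric d) (dc : metric_compatible d) (hG : borel G).

Lemma borel_eqc (f g : T -> X) : continuous f -> continuous g ->
  borel [set w | f w = g w].
Proof.
move=> fc gc.
apply: (@borel_ext T (fun w => ~ ((fun w => (f w, g w)) @^-1` [set p : X * X | p.1 <> p.2]) w) (fun w => f w = g w)).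
  by move=> w /=; split; [apply: contrapT|move=> -> ].
have hO : borel [set p : X * X | p.1 <> p.2].
  by apply: sub_sigma_algebra; exact: diag_open dm dc.
apply: borel_not; exact: (borel_preimage (pair_cont fc gc) hO).
Qed.

Lemma borel_Gc (f g : T -> X) : continuous f -> continuous g ->
  borel [set w | G (f w, g w)].
Proof.
move=> fc gc.
exact: (borel_preimage (pair_cont fc gc) hG).
Qed.

Lemma borel_Rel (p q : T -> nat -> X) :
  (forall n, continuous (fun w => p w n)) -> (forall n, continuous (fun w => q w n)) ->
  borel [set w | Rel G (p w) (q w)].
Proof.
move=> hp hq; rewrite /Rel /Vz /walk /Rr /Cc.
repeat first [ apply: borel_and | apply: borel_or | (apply: borel_forall => ?) |
  (apply: borel_exists => ?) | apply: borel_eqc | apply: borel_Gc | apply: hp | apply: hq ].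
Qed.

End BorelRel.

Unset Implicit Arguments.
Unset Strict Implicit.
Theorem theorem7p6 (X : topologicalType) (E : X -> X -> Prop) :
  polish X -> is_equivalence_rel E -> borel_graphable E ->
  borel_graphable (fs_jump E).
Proof.
move=> [_ [d [dm [dc _]]]] hE [G [hG [Gsym [Girr hGE]]]].
pose P := {ptws nat -> X}.
pose Gp : set (P * P) := [set w | w.1 <> w.2 /\ (Rel G w.1 w.2 \/ Rel G w.2 w.1)].
exists Gp; split.
  apply: borel_and.
    apply: (@borel_ext _ (fun w : P * P => ~ forall n, w.1 n = w.2 n)).
      move=> w; split.
        by move=> h e; apply: h => n; rewrite e.
      by move=> h hn; apply: h; exact: (@boolp.functional_extensionality_dep nat (fun _ => X) _ _ hn).
    apply: borel_not; apply: borel_forall => n.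
    by apply: (borel_eqc dm dc); [exact: coord1_cont|exact: coord2_cont].
  by apply: borel_or; apply: (borel_Rel dm dc hG); move=> n;
    first [exact: coord1_cont|exact: coord2_cont].
split.
  by move=> x y [xy h]; split; [move=> e; apply: xy|case: h; [right|left]].
split; first by move=> x [].
move=> x y; split.
  elim=> [u v [_ [h|h]]| u | u v w _ IH1 _ IH2].
  - exact: (Rel_sound hE hGE h).
  - exact/esym/(Rel_sound hE hGE h).
  - by [].
  - by rewrite /fs_jump IH1.
move=> /(construct hE hGE) [z [hx hy]].
apply: (@rt_trans _ _ _ z).
  have [->|xz] := boolp.pselect (x = z); first exact: rt_refl.
  by apply: rt_step; split=> //; left.
have [<-|zy] := boolp.pselect (z = y); first exact: rt_refl.
by apply: rt_step; split=> //; right.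
Qed.
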